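(* Let $\varphi(u,\mathbf{v})$ be a formula of $\{\exists,\forall,\wedge,\vee\}$-FO, where the arity of $\mathbf{v}$ is $k$. Let $\mathcal{B}$ be a finite structure with $\forall_b \exists_{b'}$ as a she. For all $c \in B$ and $\mathbf{x}:=(x_1,\ldots,x_k) \in \{b,b'\}^k$, \[ \mathcal{B} \models \varphi(b,\mathbf{x}) \ \stackrel{(I)}{\Longrightarrow} \ \mathcal{B} \models \varphi(c,\mathbf{x}) \ \stackrel{(II)}{\Longrightarrow} \ \mathcal{B} \models \varphi(b',\mathbf{x}). \]
   Context: $\{\exists,\forall,\wedge,\vee\}$-FO is the positive equality-free fragment of first-order logic. For distinct $b,b'\in B$, the hyper-operation $\forall_b\exists_{b'}:B\to\mathfrak{P}(B)\setminus\{\emptyset\}$ maps $b\mapsto B$ and every $x\neq b$ to $\{b'\}$. A she (surjective hyper-endomorphism) of $\mathcal{B}$ is a surjective hyper-operation $f$ (every element lies in some image) such that whenever $\mathcal{B}\models R(x_1,\ldots,x_i)$ for an extensional relation $R$, also $\mathcal{B}\models R(y_1,\ldots,y_i)$ for all $y_j\in f(x_j)$. *)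

(* Defs.v *)
From mathcomp Require Import all_boot.
Set Implicit Arguments. Unset Strict Implicit. Unset Printing Implicit Defensive.

Section PosFO.
Variables (Sig : Type) (ar : Sig -> nat).

(* Formulas of the positive equality-free fragment {exists, forall, /\, \/}-FO.
   Variables are natural numbers. *)
Inductive pform : Type :=
  | PAtom (R : Sig) (args : (ar R).-tuple nat)
  | PAnd (p q : pform)
  | POr (p q : pform)
  | PEx (x : nat) (p : pform)
  | PAll (x : nat) (p : pform).

Fixpoint free_in (y : nat) (p : pform) : bool :=
  match p with
  | PAtom R args => y \in (args : seq nat)
  | PAnd p q => free_in y p || free_in y q
  | POr p q => free_in y p || free_in y q
  | PEx x p => (y != x) && free_in y p
  | PAll x p => (y != x) && free_in y p
  end.

Variable B : finType.
Variable interp : forall R : Sig, pred ((ar R).-tuple B).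

Definition upd (e : nat -> B) (x : nat) (a : B) : nat -> B :=
  fun y => if y == x then a else e y.

Fixpoint sat (e : nat -> B) (p : pform) : Prop :=
  match p with
  | PAtom R args => interp (map_tuple e args)
  | PAnd p q => sat e p /\ sat e q
  | POr p q => sat e p \/ sat e q
  | PEx x p => exists a : B, sat (upd e x a) p
  | PAll x p => forall a : B, sat (upd e x a) p
  end.

(* Hyper-operations B -> P(B) \ {emptyset}, represented as B -> {set B}
   (non-emptiness is part of [is_she]). *)
Definition is_she (f : B -> {set B}) : Prop :=
  [/\ (forall x, f x != set0),
      (forall y, exists x, y \in f x) &
      (forall (R : Sig) (t t' : (ar R).-tuple B),
          interp t -> (forall j : 'I_(ar R), tnth t' j \in f (tnth t j)) ->
          interp t')].

Definition forall_exists (b b' : B) : B -> {set B} :=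
  fun x => if x == b then [set: B] else [set b'].

(* Environment for phi(u, v_1..v_k): variable 0 is u, variable i+1 is v_{i+1}. *)
Definition env (k : nat) (u : B) (xs : k.-tuple B) : nat -> B :=
  fun i => if i is j.+1 then nth u xs j else u.

End PosFO.

(* Main.v *)
Require Import Defs.
From mathcomp Require Import all_boot.

Lemma she_pres (Sig : Type) (ar : Sig -> nat) (B : finType)
  (interp : forall R : Sig, pred ((ar R).-tuple B)) (f : B -> {set B})
  (Hs : is_she interp f) (phi : pform ar) :
  forall e e' : nat -> B, (forall y, e' y \in f (e y)) ->
  sat interp e phi -> sat interp e' phi.
Proof.
case: Hs => Hne Hsur Hrel.
elim: phi => [R args|p IHp q IHq|p IHp q IHq|x p IHp|x p IHp] e e' H /=.
- move=> Hi; apply: (Hrel _ _ _ Hi) => j.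
  by rewrite !tnth_map.
- by case=> [Hp Hq]; split; [exact: IHp H Hp|exact: IHq H Hq].
- by case=> [Hp|Hq]; [left; exact: IHp H Hp|right; exact: IHq H Hq].
- case=> a Ha.
  have [a' Ha'] : exists a', a' \in f a.
    by case: (set_0Vmem (f a)) => [E|[z Hz]]; [move: (Hne a); rewrite E eqxx|exists z].
  exists a'; apply: IHp Ha => y; rewrite /upd; by case: (y == x).
- move=> Ha a'; have [a Hin] := Hsur a'.
  apply: IHp (Ha a) => y; rewrite /upd; by case: (y == x).
Qed.

Theorem lemma3p3 (Sig : Type) (ar : Sig -> nat) (B : finType)
  (interp : forall R : Sig, pred ((ar R).-tuple B))
  (k : nat) (phi : pform ar)
  (Hfree : forall y, free_in y phi -> y <= k)
  (b b' : B) (Hbb' : b != b')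
  (Hshe : is_she interp (forall_exists b b'))
  (c : B) (xs : k.-tuple B)
  (Hxs : forall i : 'I_k, tnth xs i \in [:: b; b']) :
  (sat interp (env b xs) phi -> sat interp (env c xs) phi) /\
  (sat interp (env c xs) phi -> sat interp (env b' xs) phi).
Proof.
have Hb' : forall z, b' \in forall_exists b b' z.
  by move=> z; rewrite /forall_exists; case: (z == b); rewrite ?inE ?eqxx.
have Hself : forall j d, j < k -> nth d xs j \in forall_exists b b' (nth d xs j).
  move=> j d Hj; have := Hxs (Ordinal Hj); rewrite (tnth_nth d) /= !inE.
  rewrite /forall_exists.
  case/orP=> /eqP ->; first by rewrite eqxx inE.
  by rewrite eq_sym (negbTE Hbb') inE.
split; [apply: (@she_pres _ _ _ _ _ Hshe phi (env b xs) (env c xs))|apply: (@she_pres _ _ _ _ _ Hshe phi (env c xs) (env b' xs))]; case=> [|j] /=.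
- by rewrite /forall_exists eqxx inE.
- case: (ltnP j k) => Hj.
    by rewrite (set_nth_default b c); [exact: Hself|rewrite size_tuple].
  by rewrite !nth_default ?size_tuple // /forall_exists eqxx inE.
- exact: Hb'.
- case: (ltnP j k) => Hj.
    by rewrite (set_nth_default c b'); [exact: Hself|rewrite size_tuple].
  by rewrite !nth_default ?size_tuple //.
Qed.
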